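(* Let $a,b,d>0$, $c>c_-$, and $\phi(x)=\frac{ax^3+bx^2+cx+d}{x^3}$, $x>0$. If $p$ is a prime period two solution of $\phi$ (i.e. $\phi(\phi(p))=p$ and $\phi(p)\neq p$), then $p$ is a zero of the sixth order polynomial $$G(x)=a^3x^6+(2a^2b-ac-d)x^5+(ab^2-ad-bc+2a^2c)x^4+(2a^2d+2abc-c^2-bd)x^3+(ac^2+2abd-2cd)x^2+(2acd-d^2)x+ad^2.$$ Consequently $\phi$ has at most three $2$-cycles.
   Context: $c_-$ is the unique negative zero of $Q(x)=4ax^3-b^2x^2-18abd\,x+27a^2d^2+4db^3$. A 2-cycle of $\phi$ is a pair $(p,\phi(p))$ where $p$ is a prime period two solution. *)

(* Defs.v *)
From HB Require Import structures.
From mathcomp Require Import all_boot all_order all_algebra.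
Set Implicit Arguments. Unset Strict Implicit. Unset Printing Implicit Defensive.
Import Order.TTheory GRing.Theory Num.Theory.
Local Open Scope ring_scope.

Definition Qpol (R : realFieldType) (a b d x : R) : R :=
  4 * a * x ^+ 3 - b ^+ 2 * x ^+ 2 - 18 * a * b * d * x
  + 27 * a ^+ 2 * d ^+ 2 + 4 * d * b ^+ 3.

Definition phi (R : realFieldType) (a b c d x : R) : R :=
  (a * x ^+ 3 + b * x ^+ 2 + c * x + d) / x ^+ 3.

Definition Gpol (R : realFieldType) (a b c d x : R) : R :=
  a ^+ 3 * x ^+ 6 + (2 * a ^+ 2 * b - a * c - d) * x ^+ 5
  + (a * b ^+ 2 - a * d - b * c + 2 * a ^+ 2 * c) * x ^+ 4
  + (2 * a ^+ 2 * d + 2 * a * b * c - c ^+ 2 - b * d) * x ^+ 3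
  + (a * c ^+ 2 + 2 * a * b * d - 2 * c * d) * x ^+ 2
  + (2 * a * c * d - d ^+ 2) * x + a * d ^+ 2.

(* p is a prime period two solution of phi on (0, oo):
   p > 0, phi p > 0 (so phi (phi p) is defined), phi (phi p) = p, phi p <> p *)
Definition prime_period_two (R : realFieldType) (a b c d p : R) : Prop :=
  0 < p /\ 0 < phi a b c d p /\ phi a b c d (phi a b c d p) = p
  /\ phi a b c d p <> p.

(* Main.v *)
Require Import Defs.
From HB Require Import structures.
From mathcomp Require Import all_boot all_order all_algebra.
From mathcomp Require Import ring zify.
Import Order.TTheory GRing.Theory Num.Theory.
Local Open Scope ring_scope.

Lemma part1 (R : realFieldType) (a b c d p : R) :
  prime_period_two a b c d p -> Gpol a b c d p = 0.
Proof.
case=> p0 [q0 [hqq hne]].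
set q := phi a b c d p in q0 hqq hne.
set N := a * p ^+ 3 + b * p ^+ 2 + c * p + d.
have hN : N = q * p ^+ 3.
  by rewrite /q /phi -/N divfK // expf_neq0 // gt_eqF.
have hM : a * q ^+ 3 + b * q ^+ 2 + c * q + d = p * q ^+ 3.
  by rewrite -hqq /phi divfK // expf_neq0 // gt_eqF.
set H := q ^+ 2 * (a - p) + q * (a * p + b - p ^+ 2) + (a * p ^+ 2 + b * p + c).
have hH : H = 0.
  have : (p - q) * H = 0.
    have e : (p - q) * H = (N - q * p ^+ 3) - (a * q ^+ 3 + b * q ^+ 2 + c * q + d - p * q ^+ 3).
      by rewrite /H /N; ring.
    by rewrite e hN hM !subrr ?subr0.
  move/eqP; rewrite mulf_eq0 subr_eq0 => /orP [/eqP e|/eqP //].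
  by case: hne.
have e : Gpol a b c d p = N ^+ 2 * (a - p) + N * p ^+ 3 * (a * p + b - p ^+ 2) + p ^+ 6 * (a * p ^+ 2 + b * p + c).
  by rewrite /Gpol /N; ring.
rewrite e hN.
transitivity (p ^+ 6 * H); first by rewrite /H; ring.
by rewrite hH mulr0.
Qed.

Lemma ppt_phi (R : realFieldType) (a b c d p : R) :
  prime_period_two a b c d p -> prime_period_two a b c d (phi a b c d p).
Proof.
case=> p0 [q0 [hqq hne]]; split=> //; rewrite hqq; split=> //; split=> //.
by move=> e; apply: hne.
Qed.

Definition Gp (R : realFieldType) (a b c d : R) : {poly R} :=
  Poly [:: a * d ^+ 2; 2 * a * c * d - d ^+ 2;
          a * c ^+ 2 + 2 * a * b * d - 2 * c * d;
          2 * a ^+ 2 * d + 2 * a * b * c - c ^+ 2 - b * d;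
          a * b ^+ 2 - a * d - b * c + 2 * a ^+ 2 * c;
          2 * a ^+ 2 * b - a * c - d; a ^+ 3].

Arguments Gp {R}.
Lemma Gp_eval (R : realFieldType) (a b c d x : R) : (Gp a b c d).[x] = Gpol a b c d x.
Proof. by rewrite /Gp horner_Poly /= /Gpol; ring. Qed.

Theorem lemma1 (R : realFieldType) (a b c d cm : R) :
  0 < a -> 0 < b -> 0 < d ->
  (* cm = c_- is the unique negative zero of Q *)
  cm < 0 -> Qpol a b d cm = 0 ->
  (forall y : R, y < 0 -> Qpol a b d y = 0 -> y = cm) ->
  cm < c ->
  (forall p : R, prime_period_two a b c d p -> Gpol a b c d p = 0) /\
  (* at most three 2-cycles: any list of prime period two points, no two of
     which lie on the same 2-cycle {p, phi p}, has length at most 3 *)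
  (forall s : seq R,
      (forall p, p \in s -> prime_period_two a b c d p) ->
      uniq s ->
      (forall p q, p \in s -> q \in s -> q <> phi a b c d p) ->
      (size s <= 3)%N).
Proof.
move=> a0 _ _ _ _ _ _; split; first exact: part1.
move=> s hs us hq.
set f := phi a b c d.
have hnz : Gp a b c d != 0.
  apply/eqP => e; have : (Gp a b c d)`_6 = 0 by rewrite e coef0.
  by rewrite coef_Poly /=; apply/eqP; rewrite expf_neq0 // gt_eqF.
have := max_poly_roots (rs := s ++ map f s) hnz.
have -> : all (root (Gp a b c d)) (s ++ map f s).
  rewrite all_cat; apply/andP; split; apply/allP => x.
    by move=> xs; rewrite /root Gp_eval part1 //; exact: hs.
  by case/mapP => y ys ->; rewrite /root Gp_eval part1 //; apply: ppt_phi; exact: hs.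
have -> : uniq (s ++ map f s).
  rewrite cat_uniq us /=; apply/andP; split.
    apply/hasPn => x /mapP [y ys ->]; apply/negP => fys.
    exact: (hq y (f y) ys fys).
  rewrite map_inj_in_uniq // => x y xs ys e.
  have [_ [_ [hx _]]] := hs x xs; have [_ [_ [hy _]]] := hs y ys.
  by rewrite -hx -hy -/f e.
move=> /(_ isT isT); rewrite size_cat size_map.
have := size_Poly [:: a * d ^+ 2; 2 * a * c * d - d ^+ 2;
          a * c ^+ 2 + 2 * a * b * d - 2 * c * d;
          2 * a ^+ 2 * d + 2 * a * b * c - c ^+ 2 - b * d;
          a * b ^+ 2 - a * d - b * c + 2 * a ^+ 2 * c;
          2 * a ^+ 2 * b - a * c - d; a ^+ 3].
rewrite /= -/(Gp a b c d) => h1 h2.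
have := leq_trans h2 h1; lia.
Qed.
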